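(* Let $1\le r\le N-1$ and let $\mathcal A=\mathbb{C}^{N\times N}((\epsilon))$ denote the ring of matrix asymptotic expansions $M_0+M_1\epsilon+O(\epsilon^2)$, $M_i\in\mathbb{C}^{N\times N}$, $\epsilon\to0$. Write matrices in block form $\begin{pmatrix}A&B\\C&D\end{pmatrix}$ with $A\in\mathbb{C}^{r\times r}$, $B\in\mathbb{C}^{r\times(N-r)}$, $C\in\mathbb{C}^{(N-r)\times r}$, $D\in\mathbb{C}^{(N-r)\times(N-r)}$. Let $\mathfrak K$ be the set of matrices with $A=0,B=0$, and $\mathfrak L$ the set of matrices with $B=0,D=0$; let $\mathcal A_{\mathfrak K}=\{K\in\mathcal A: K|_{\epsilon=0}\in\mathfrak K\}$ and $\mathcal A_{\mathfrak L}=\{L\in\mathcal A: L|_{\epsilon=0}\in\mathfrak L\}$. Then: (1) $\mathcal A_{\mathfrak K}$ and $\mathcal A_{\mathfrak L}$ are subrings (without identity) of $\mathcal A$. (2) If $K\in\mathcal A_{\mathfrak K}$ with $\det K=O(\epsilon^r)$ as $\epsilon\to0$, then $K^{-1}\in\epsilon^{-1}\mathcal A_{\mathfrak L}$; conversely, if $L\in\epsilon^{-1}\mathcal A_{\mathfrak L}$ with $\det L=O(\epsilon^{-r})$, then $L^{-1}\in\mathcal A_{\mathfrak K}$. (3) If $K=\begin{pmatrix}0&0\\C_0&D_0\end{pmatrix}+\begin{pmatrix}A_1&B_1\\C_1&D_1\end{pmatrix}\epsilon+O(\epsilon^2)\in\mathcal A_{\mathfrak K}$, then $\det K=\epsilon^r\det\begin{pmatrix}A_1&B_1\\C_0&D_0\end{pmatrix}+O(\epsilon^{r+1})$.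 (4) If $L=\begin{pmatrix}A_0&0\\C_0&0\end{pmatrix}\epsilon^{-1}+\begin{pmatrix}A_1&B_1\\C_1&D_1\end{pmatrix}+O(\epsilon)\in\epsilon^{-1}\mathcal A_{\mathfrak L}$, then $\det L=\epsilon^{-r}\det\begin{pmatrix}A_0&B_1\\C_0&D_1\end{pmatrix}+O(\epsilon^{-r+1})$. (5) $\mathcal A_{\mathfrak K}\cdot\mathcal A\subset\mathcal A_{\mathfrak K}$ and $\mathcal A\cdot\mathcal A_{\mathfrak L}\subset\mathcal A_{\mathfrak L}$ (right and left ideals, respectively). (6) $\epsilon^{-1}\mathcal A_{\mathfrak L}\cdot\mathcal A_{\mathfrak K}\subset\mathcal A$.
   Context: A condition $\det X=O(\epsilon^{k})$ is understood in the paper's sense of exact order: $\det X=c\,\epsilon^{k}+O(\epsilon^{k+1})$ with $c\neq0$. $\epsilon^{-1}\mathcal A_{\mathfrak L}$ denotes the set of expansions $\epsilon^{-1}L$ with $L\in\mathcal A_{\mathfrak L}$. *)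

(* Defs.v *)
From HB Require Import structures.
From mathcomp Require Import all_boot all_order all_algebra.
From mathcomp Require Import complex.
From mathcomp Require Import reals.
Set Implicit Arguments. Unset Strict Implicit. Unset Printing Implicit Defensive.
Import Order.TTheory GRing.Theory Num.Theory.
Local Open Scope ring_scope.

(* A formal matrix expansion  M_0 + M_1 eps + M_2 eps^2 + ...  (element of
   C^{N x N}[[eps]]) is represented by its coefficient sequence. *)
Definition mxser (F : Type) (n : nat) := nat -> 'M[F]_n.

Section Ser.
Variables (F : comRingType) (n : nat).

Definition addS (K M : mxser F n) : mxser F n := fun k => K k + M k.
Definition oppS (K : mxser F n) : mxser F n := fun k => - K k.
Definition zeroS : mxser F n := fun _ => 0.
Definition mulS (K M : mxser F n) : mxser F n :=
  fun k => \sum_(i < k.+1) K i *m M (k - i)%N.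
Definition epsI : mxser F n := fun k => if k == 1%N then 1%:M else 0.

Definition truncS (m : nat) (K : mxser F n) : 'M[{poly F}]_n :=
  \matrix_(i, j) \poly_(l < m) (K l i j).
(* coefficient sequence of det K : the coefficient of eps^k of det K only
   depends on the coefficients of K of order <= k *)
Definition detS (K : mxser F n) : nat -> F :=
  fun k => (\det (truncS k.+1 K))`_k.
End Ser.

(* f = O(eps^k) in the exact-order sense: f = c eps^k + O(eps^(k+1)), c != 0 *)
Definition exact_order (F : ringType) (f : nat -> F) (k : nat) :=
  (forall j, (j < k)%N -> f j = 0) /\ f k != 0.

Definition expands_as (F : ringType) (f : nat -> F) (k : nat) (c : F) :=
  (forall j, (j < k)%N -> f j = 0) /\ f k = c.

Section Blocks.
Variables (F : comRingType) (r s : nat).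
(* block structure with A : r x r, B : r x s, C : s x r, D : s x s, N = r + s *)
Definition frakK (M : 'M[F]_(r + s)) := ulsubmx M = 0 /\ ursubmx M = 0.
Definition frakL (M : 'M[F]_(r + s)) := ursubmx M = 0 /\ drsubmx M = 0.
Definition inAK (K : mxser F (r + s)) := frakK (K 0%N).
Definition inAL (L : mxser F (r + s)) := frakL (L 0%N).
End Blocks.

(* Main.v *)
From HB Require Import structures.
From mathcomp Require Import all_boot all_order all_algebra.
From mathcomp Require Import complex.
From mathcomp Require Import reals.
Require Import Defs.
From Stdlib Require Import FunctionalExtensionality.
Import Order.TTheory GRing.Theory Num.Theory.
Set Implicit Arguments. Unset Strict Implicit. Unset Printing Implicit Defensive.
Local Open Scope ring_scope.

Section Alg.
Variables (F : comRingType) (n : nat).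
Local Notation S := (mxser F n).

Lemma mulS_rev (A B : S) k :
  mulS A B k = \sum_(j < k.+1) A (k - j)%N *m B j.
Proof.
rewrite /mulS (reindex_inj rev_ord_inj) /=.
by apply: eq_bigr => j _; rewrite (sub_ordK j).
Qed.

Lemma mulSE (A B : S) k :
  mulS A B k = \sum_(i < k.+1) A i *m B (k - i)%N.
Proof. by []. Qed.

Lemma mulSA (A B C : S) : mulS (mulS A B) C = mulS A (mulS B C).
Proof.
apply: functional_extensionality => i; symmetry.
rewrite [LHS]mulSE [RHS]mulS_rev.
pose coef3 (j k : nat) := A j *m (B (i - j - k)%N *m C k).
transitivity (\sum_(j < i.+1) \sum_(k < i.+1 | (k <= i - j)%N) coef3 j k).
  apply: eq_bigr => /= j _; rewrite mulS_rev mulmx_sumr /=.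
  by rewrite (big_ord_narrow_leq (leq_subr _ _)).
rewrite (exchange_big_dep predT) //=; apply: eq_bigr => k _.
transitivity (\sum_(j < i.+1 | (j <= i - k)%N) coef3 j k).
  apply: eq_bigl => j; rewrite -ltnS -(ltnS j) -!subSn ?leq_ord //.
  by rewrite -subn_gt0 -(subn_gt0 j) -!subnDA addnC.
rewrite (big_ord_narrow_leq (leq_subr _ _)) mulSE mulmx_suml /=.
by apply: eq_bigr => j _; rewrite /coef3 -!subnDA addnC mulmxA.
Qed.

Definition oneS : S := fun k => if k == 0%N then 1%:M else 0.

Lemma mul1S (A : S) : mulS oneS A = A.
Proof.
apply: functional_extensionality => k; rewrite /mulS big_ord_recl subn0 /oneS /=.
by rewrite mul1mx big1 ?addr0 // => j _; rewrite mul0mx.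
Qed.

Lemma mulS1 (A : S) : mulS A oneS = A.
Proof.
apply: functional_extensionality => k; rewrite mulS_rev big_ord_recl subn0 /oneS /=.
by rewrite mulmx1 big1 ?addr0 // => j _; rewrite mulmx0.
Qed.

Lemma mulSeps (A : S) : mulS A (epsI F n) = mulS (epsI F n) A.
Proof.
apply: functional_extensionality => k; rewrite mulS_rev /mulS /epsI.
apply: eq_bigr => j _; case: eqP => _; by rewrite ?mulmx1 ?mul1mx ?mulmx0 ?mul0mx.
Qed.

End Alg.

Section Inv.
Variables (F : comUnitRingType) (n : nat).
Local Notation S := (mxser F n).
Variable Q : S.
Hypothesis Q0u : Q 0%N \in unitmx.

Fixpoint rseq (k : nat) : seq 'M[F]_n :=
  if k is k'.+1 then let s := rseq k' in
    rcons s (- (invmx (Q 0%N) *m \sum_(i < k'.+1) Q i.+1 *m nth 0 s (k' - i)%N))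
  else [:: invmx (Q 0%N)].

Lemma size_rseq k : size (rseq k) = k.+1.
Proof. by elim: k => //= k IH; rewrite size_rcons IH. Qed.

Lemma nth_rseq k j : (j <= k)%N -> nth 0 (rseq k) j = nth 0 (rseq j) j.
Proof.
elim: k => [|k IH]; first by rewrite leqn0 => /eqP->.
rewrite leq_eqVlt => /orP[/eqP->//|]; rewrite ltnS => hj.
by rewrite /= nth_rcons size_rseq ltnS hj IH.
Qed.

Definition Rinv : S := fun k => nth 0 (rseq k) k.

Lemma Rinv0 : Rinv 0%N = invmx (Q 0%N). Proof. by []. Qed.
Lemma RinvS k : Rinv k.+1 =
  - (invmx (Q 0%N) *m \sum_(i < k.+1) Q i.+1 *m Rinv (k - i)%N).
Proof.
rewrite /Rinv /= nth_rcons size_rseq ltnn eqxx; congr (- (_ *m _)).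
by apply: eq_bigr => i _; rewrite nth_rseq // leq_subr.
Qed.

Lemma mulS_Rinv : mulS Q Rinv = oneS F n.
Proof.
apply: functional_extensionality => k; rewrite mulSE /oneS.
case: k => [|k]; first by rewrite big_ord1 subn0 Rinv0 mulmxV.
rewrite big_ord_recl subn0 RinvS mulmxN mulmxA mulmxV // mul1mx /=.
rewrite addrC; apply/eqP; rewrite subr_eq0; apply/eqP.
by apply: eq_bigr => i _; rewrite subSS.
Qed.

Fixpoint lseq (k : nat) : seq 'M[F]_n :=
  if k is k'.+1 then let s := lseq k' in
    rcons s (- ((\sum_(i < k'.+1) nth 0 s i *m Q (k'.+1 - i)%N) *m invmx (Q 0%N)))
  else [:: invmx (Q 0%N)].

Lemma size_lseq k : size (lseq k) = k.+1.
Proof. by elim: k => //= k IH; rewrite size_rcons IH. Qed.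

Lemma nth_lseq k j : (j <= k)%N -> nth 0 (lseq k) j = nth 0 (lseq j) j.
Proof.
elim: k => [|k IH]; first by rewrite leqn0 => /eqP->.
rewrite leq_eqVlt => /orP[/eqP->//|]; rewrite ltnS => hj.
by rewrite /= nth_rcons size_lseq ltnS hj IH.
Qed.

Definition Linv : S := fun k => nth 0 (lseq k) k.

Lemma LinvS k : Linv k.+1 =
  - ((\sum_(i < k.+1) Linv i *m Q (k.+1 - i)%N) *m invmx (Q 0%N)).
Proof.
rewrite /Linv /= nth_rcons size_lseq ltnn eqxx; congr (- (_ *m _)).
by apply: eq_bigr => i _; rewrite nth_lseq // -ltnS.
Qed.

Lemma mulS_Linv : mulS Linv Q = oneS F n.
Proof.
apply: functional_extensionality => k; rewrite mulSE /oneS.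
case: k => [|k]; first by rewrite big_ord1 subn0 /Linv /= mulVmx.
rewrite big_ord_recr subnn LinvS /= mulNmx -mulmxA mulVmx // mulmx1.
by rewrite addrC addNr.
Qed.

Lemma Linv_Rinv : Linv = Rinv.
Proof.
by rewrite -[Linv]mulS1 -mulS_Rinv -mulSA mulS_Linv mul1S.
Qed.

End Inv.
Section Det.
Variables (F : comRingType) (r s : nat).

Lemma X_drop1 (p : {poly F}) : p`_0 = 0 -> 'X * drop_poly 1 p = p.
Proof.
move=> p0; apply/polyP => i; rewrite coefXM coef_drop_poly.
by case: i => [|i] //=; rewrite addn1.
Qed.

Lemma det_top (P : 'M[{poly F}]_(r + s)) :
  (forall i j, (usubmx P i j)`_0 = 0) ->
  \det P = 'X^r * \det (col_mx (map_mx (drop_poly 1) (usubmx P)) (dsubmx P)).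
Proof.
move=> h.
have hP : P = block_mx ('X%:M) 0 0 1%:M *m
            col_mx (map_mx (drop_poly 1) (usubmx P)) (dsubmx P).
  rewrite mul_block_col !mul0mx mul1mx addr0 add0r mul_scalar_mx.
  rewrite -[LHS]vsubmxK; congr col_mx.
  by apply/matrixP; move=> i j; rewrite !mxE X_drop1 //; have := h i j; rewrite mxE.
by rewrite {1}hP det_mulmx det_ublock det_scalar det1 mulr1.
Qed.

Lemma det_right (P : 'M[{poly F}]_(r + s)) :
  (forall i j, (rsubmx P i j)`_0 = 0) ->
  \det P = 'X^s * \det (row_mx (lsubmx P) (map_mx (drop_poly 1) (rsubmx P))).
Proof.
move=> h.
have hP : P = row_mx (lsubmx P) (map_mx (drop_poly 1) (rsubmx P)) *m
              block_mx 1%:M 0 0 ('X%:M).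
  rewrite mul_row_block !mulmx0 mulmx1 addr0 add0r mul_mx_scalar.
  rewrite -[LHS]hsubmxK; congr row_mx.
  by apply/matrixP; move=> i j; rewrite !mxE X_drop1 //; have := h i j; rewrite mxE.
by rewrite {1}hP det_mulmx det_lblock !det_scalar expr1n mul1r mulrC.
Qed.

Lemma coef0_det (P : 'M[{poly F}]_(r + s)) :
  (\det P)`_0 = \det (map_mx (fun p : {poly F} => p`_0) P).
Proof.
rewrite -horner_coef0 -horner_evalE -det_map_mx; congr (\det _).
by apply/matrixP => i j; rewrite !mxE /= horner_evalE horner_coef0.
Qed.

End Det.

Section DetS.
Variables (F : comRingType) (r s : nat).
Hypotheses (hr : (0 < r)%N) (hs : (0 < s)%N).

Lemma usub0 (M : 'M[F]_(r + s)) : frakK M -> usubmx M = 0.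
Proof. by case=> h1 h2; rewrite -[usubmx M]hsubmxK; move: h1 h2; rewrite /ulsubmx /ursubmx => -> ->; rewrite row_mx0. Qed.

Lemma rsub0 (M : 'M[F]_(r + s)) : frakL M -> rsubmx M = 0.
Proof. by case=> h1 h2; have := submxK M; rewrite h1 h2 => <-; rewrite block_mxEh row_mxKr col_mx0. Qed.

Lemma detS_K (K : mxser F (r + s)) : inAK K ->
  expands_as (detS K) r
     (\det (block_mx (ulsubmx (K 1%N)) (ursubmx (K 1%N))
                     (dlsubmx (K 0%N)) (drsubmx (K 0%N)))).
Proof.
move=> /usub0 hK.
have h m : forall i j, (usubmx (truncS m.+1 K) i j)`_0 = 0.
  move=> i j; rewrite !mxE coef_poly /=.
  by have := congr1 (fun M : 'M_(_,_) => M i j) hK; rewrite !mxE.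
split.
  by move=> j hj; rewrite /detS det_top // coefXnM hj.
rewrite /detS det_top // coefXnM ltnn subnn coef0_det block_mxEv !hsubmxK.
congr (\det _); apply/matrixP => i j; rewrite !mxE; case: split => k;
  by rewrite !mxE ?coef_drop_poly coef_poly /= ?ltnS ?hr.
Qed.

Lemma detS_L (L : mxser F (r + s)) : inAL L ->
  expands_as (detS L) s
     (\det (block_mx (ulsubmx (L 0%N)) (ursubmx (L 1%N))
                     (dlsubmx (L 0%N)) (drsubmx (L 1%N)))).
Proof.
move=> /rsub0 hL.
have h m : forall i j, (rsubmx (truncS m.+1 L) i j)`_0 = 0.
  move=> i j; rewrite !mxE coef_poly /=.
  by have := congr1 (fun M : 'M_(_,_) => M i j) hL; rewrite !mxE.
split.
  by move=> j hj; rewrite /detS det_right // coefXnM hj.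
rewrite /detS det_right // coefXnM ltnn subnn coef0_det block_mxEv.
congr (\det _); apply/matrixP => i j; rewrite -(splitK j) -(splitK i);
  case: (split j) => j'; case: (split i) => i' /=;
  by rewrite !(row_mxEl, row_mxEr, col_mxEu, col_mxEd, mxE) ?coef_drop_poly coef_poly /= ?ltnS ?hs.
Qed.

End DetS.

Section Blk.
Variables (F : comUnitRingType) (r s : nat).
Local Notation S := (mxser F (r + s)).

Definition diag01 : 'M[F]_(r + s) := block_mx 0 0 0 1%:M.
Definition diag10 : 'M[F]_(r + s) := block_mx 1%:M 0 0 0.
Definition Dser : S := fun k => if k == 0%N then diag01 else if k == 1%N then diag10 else 0.
Definition Eser : S := fun k => if k == 0%N then diag10 else if k == 1%N then diag01 else 0.

Lemma frakK_usub (M : 'M[F]_(r + s)) : usubmx M = 0 -> frakK M.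
Proof.
move/matrixP=> h; split; apply/matrixP => i j; rewrite !mxE.
  by have := h i (lshift s j); rewrite !mxE.
by have := h i (rshift r j); rewrite !mxE.
Qed.

Lemma frakL_rsub (M : 'M[F]_(r + s)) : rsubmx M = 0 -> frakL M.
Proof.
move/matrixP=> h; split; apply/matrixP => i j; rewrite !mxE.
  by have := h (lshift s i) j; rewrite !mxE.
by have := h (rshift r i) j; rewrite !mxE.
Qed.

Lemma mulS_supl (A B : S) k : (forall i, (1 < i)%N -> A i = 0) ->
  mulS A B k.+1 = A 0%N *m B k.+1 + A 1%N *m B k.
Proof.
move=> h; rewrite mulSE big_ord_recl big_ord_recl big1 ?addr0.
  by rewrite /= subn1.
by move=> i _; rewrite h ?mul0mx.
Qed.

Lemma mulS_supr (A B : S) k : (forall i, (1 < i)%N -> B i = 0) ->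
  mulS A B k.+1 = A k.+1 *m B 0%N + A k *m B 1%N.
Proof.
move=> h; rewrite mulS_rev big_ord_recl big_ord_recl big1 ?addr0.
  by rewrite /= subn1.
by move=> i _; rewrite h ?mulmx0.
Qed.

Lemma d01_10 : diag01 *m diag10 = 0.
Proof. by rewrite /diag01 /diag10 mulmx_block !(mul0mx, mulmx0, mul1mx, mulmx1, addr0) block_mx0. Qed.
Lemma d10_01 : diag10 *m diag01 = 0.
Proof. by rewrite /diag01 /diag10 mulmx_block !(mul0mx, mulmx0, mul1mx, mulmx1, addr0) block_mx0. Qed.
Lemma d01_01 : diag01 *m diag01 = diag01.
Proof. by rewrite /diag01 mulmx_block !(mul0mx, mulmx0, mul1mx, mulmx1, addr0, add0r). Qed.
Lemma d10_10 : diag10 *m diag10 = diag10.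
Proof. by rewrite /diag10 mulmx_block !(mul0mx, mulmx0, mul1mx, mulmx1, addr0, add0r). Qed.
Lemma d_sum : diag01 + diag10 = 1%:M.
Proof. by rewrite /diag01 /diag10 add_block_mx !(addr0, add0r) -scalar_mx_block. Qed.

Lemma supD i : (1 < i)%N -> Dser i = 0.
Proof. by case: i => [|[|i]]. Qed.
Lemma supE i : (1 < i)%N -> Eser i = 0.
Proof. by case: i => [|[|i]]. Qed.

Lemma DE : mulS Dser Eser = epsI F (r + s).
Proof.
apply: functional_extensionality => k; case: k => [|k].
  by rewrite mulSE big_ord1 /= d01_10.
rewrite mulS_supl; last exact: supD.
case: k => [|[|k]] /=; rewrite /epsI /=.
- by rewrite d01_01 d10_10 d_sum.
- by rewrite mulmx0 add0r d10_01.
- by rewrite !mulmx0 addr0.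
Qed.

Lemma ED : mulS Eser Dser = epsI F (r + s).
Proof.
apply: functional_extensionality => k; case: k => [|k].
  by rewrite mulSE big_ord1 /= d10_01.
rewrite mulS_supl; last exact: supE.
case: k => [|[|k]] /=; rewrite /epsI /=.
- by rewrite d10_10 d01_01 addrC d_sum.
- by rewrite mulmx0 add0r d01_10.
- by rewrite !mulmx0 addr0.
Qed.

Definition QK (K : S) : S := fun k => col_mx (usubmx (K k.+1)) (dsubmx (K k)).
Definition QL (L : S) : S := fun k => row_mx (lsubmx (L k)) (rsubmx (L k.+1)).

Lemma d01_col (U : 'M[F]_(r, r + s)) Dd : diag01 *m col_mx U Dd = col_mx 0 Dd.
Proof. by rewrite /diag01 mul_block_col !mul0mx mul1mx !add0r. Qed.
Lemma d10_col (U : 'M[F]_(r, r + s)) Dd : diag10 *m col_mx U Dd = col_mx U 0.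
Proof. by rewrite /diag10 mul_block_col !mul0mx mul1mx !addr0. Qed.
Lemma row_d01 (Lf : 'M[F]_(r + s, r)) Rt : row_mx Lf Rt *m diag01 = row_mx 0 Rt.
Proof. by rewrite /diag01 mul_row_block !mulmx0 mulmx1 !add0r. Qed.
Lemma row_d10 (Lf : 'M[F]_(r + s, r)) Rt : row_mx Lf Rt *m diag10 = row_mx Lf 0.
Proof. by rewrite /diag10 mul_row_block !mulmx0 mulmx1 !addr0. Qed.

Lemma DQK (K : S) : inAK K -> mulS Dser (QK K) = K.
Proof.
move=> /usub0 hK; apply: functional_extensionality => k; case: k => [|k].
  by rewrite mulSE big_ord1 /= /QK d01_col -hK vsubmxK.
rewrite mulS_supl; last exact: supD.
by rewrite /= /QK d01_col d10_col add_col_mx addr0 add0r vsubmxK.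
Qed.

Lemma QLE (L : S) : inAL L -> mulS (QL L) Eser = L.
Proof.
move=> /rsub0 hL; apply: functional_extensionality => k; case: k => [|k].
  by rewrite mulSE big_ord1 /= /QL row_d10 -hL hsubmxK.
rewrite mulS_supr; last exact: supE.
by rewrite /= /QL row_d10 row_d01 add_row_mx addr0 add0r hsubmxK.
Qed.

Lemma RQ (Q : S) : Q 0%N \in unitmx -> mulS (Rinv Q) Q = oneS F (r + s).
Proof. by move=> hQ; rewrite -(Linv_Rinv hQ) mulS_Linv. Qed.

Lemma inv_fromK (K : S) : inAK K -> QK K 0%N \in unitmx ->
  exists L : S, inAL L /\ mulS K L = epsI F (r + s) /\ mulS L K = epsI F (r + s).
Proof.
move=> hK hQ; set Q := QK K; exists (mulS (Rinv Q) Eser); split; last split.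
- apply: frakL_rsub; rewrite /inAL mulSE big_ord1 /= -[Rinv Q 0%N]hsubmxK row_d10.
  by rewrite -[RHS](row_mxKr (lsubmx (Rinv Q 0%N)) 0) .
- by rewrite -(DQK hK) mulSA -(mulSA Q) mulS_Rinv // mul1S DE.
- rewrite -(DQK hK) mulSA -(mulSA Eser) ED -mulSeps.
  by rewrite -mulSA RQ // mul1S.
Qed.

Lemma inv_fromL (L : S) : inAL L -> QL L 0%N \in unitmx ->
  exists K : S, inAK K /\ mulS L K = epsI F (r + s) /\ mulS K L = epsI F (r + s).
Proof.
move=> hL hQ; set Q := QL L; exists (mulS Dser (Rinv Q)); split; last split.
- apply: frakK_usub; rewrite /inAK mulSE big_ord1 /= -[Rinv Q 0%N]vsubmxK d01_col.
  by rewrite -[RHS](col_mxKu 0 (dsubmx (Rinv Q 0%N))).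
- rewrite -(QLE hL) mulSA -(mulSA Eser) ED -mulSeps.
  by rewrite -mulSA mulS_Rinv // mul1S.
- by rewrite -(QLE hL) mulSA -(mulSA (Rinv Q)) RQ // mul1S DE.
Qed.

End Blk.

Lemma blockQL (F : Type) (r s : nat) (A B : 'M[F]_(r + s)) :
  block_mx (ulsubmx A) (ursubmx B) (dlsubmx A) (drsubmx B) = row_mx (lsubmx A) (rsubmx B).
Proof.
apply/matrixP => i j; rewrite -(splitK i) -(splitK j) block_mxEv.
case: (split j) => j'; case: (split i) => i' /=;
  by rewrite !(row_mxEl, row_mxEr, col_mxEu, col_mxEd, mxE).
Qed.

Lemma usubD (F : comRingType) (r s : nat) (A B : 'M[F]_(r + s)) :
  usubmx (A + B) = usubmx A + usubmx B.
Proof. by apply/matrixP => i j; rewrite !mxE. Qed.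
Lemma usubN (F : comRingType) (r s : nat) (A : 'M[F]_(r + s)) :
  usubmx (- A) = - usubmx A.
Proof. by apply/matrixP => i j; rewrite !mxE. Qed.
Lemma rsubD (F : comRingType) (r s : nat) (A B : 'M[F]_(r + s)) :
  rsubmx (A + B) = rsubmx A + rsubmx B.
Proof. by apply/matrixP => i j; rewrite !mxE. Qed.
Lemma rsubN (F : comRingType) (r s : nat) (A : 'M[F]_(r + s)) :
  rsubmx (- A) = - rsubmx A.
Proof. by apply/matrixP => i j; rewrite !mxE. Qed.

Lemma blockQK (F : Type) (r s : nat) (A B : 'M[F]_(r + s)) :
  block_mx (ulsubmx A) (ursubmx A) (dlsubmx B) (drsubmx B) = col_mx (usubmx A) (dsubmx B).
Proof. by rewrite block_mxEv !hsubmxK. Qed.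

Theorem proposition1 (R : realType) (r s : nat) (hr : (0 < r)%N) (hs : (0 < s)%N) :
  let C := complex R in
  (* (1) subrings without identity *)
  ((inAK (zeroS C (r + s)) /\
    (forall K1 K2 : mxser C (r + s), inAK K1 -> inAK K2 ->
       [/\ inAK (addS K1 K2), inAK (oppS K1) & inAK (mulS K1 K2)])) /\
   (inAL (zeroS C (r + s)) /\
    (forall L1 L2 : mxser C (r + s), inAL L1 -> inAL L2 ->
       [/\ inAL (addS L1 L2), inAL (oppS L1) & inAL (mulS L1 L2)]))) /\
  (* (2) inverses *)
  ((forall K : mxser C (r + s), inAK K -> exact_order (detS K) r ->
      exists L : mxser C (r + s),
        inAL L /\ mulS K L = epsI C (r + s) /\ mulS L K = epsI C (r + s)) /\
   (forall L : mxser C (r + s), inAL L -> exact_order (detS L) s ->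
      exists K : mxser C (r + s),
        inAK K /\ mulS L K = epsI C (r + s) /\ mulS K L = epsI C (r + s))) /\
  (* (3) leading term of det K *)
  (forall K : mxser C (r + s), inAK K ->
     expands_as (detS K) r
       (\det (block_mx (ulsubmx (K 1%N)) (ursubmx (K 1%N))
                       (dlsubmx (K 0%N)) (drsubmx (K 0%N))))) /\
  (* (4) leading term of det (eps^-1 L) = eps^-(r+s) det L *)
  (forall L : mxser C (r + s), inAL L ->
     expands_as (detS L) s
       (\det (block_mx (ulsubmx (L 0%N)) (ursubmx (L 1%N))
                       (dlsubmx (L 0%N)) (drsubmx (L 1%N))))) /\
  (* (5) right / left ideals *)
  ((forall K M : mxser C (r + s), inAK K -> inAK (mulS K M)) /\
   (forall M L : mxser C (r + s), inAL L -> inAL (mulS M L))) /\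
  (* (6) (eps^-1 L) K has no eps^-1 term *)
  (forall L K : mxser C (r + s), inAL L -> inAK K -> mulS L K 0%N = 0).
Proof.
move=> C.
have uK (M : 'M[C]_(r + s)) : frakK M -> usubmx M = 0 by exact: usub0.
have rL (M : 'M[C]_(r + s)) : frakL M -> rsubmx M = 0 by exact: rsub0.
split; [split; split|split; [split|split; [|split; [|split; [split|]]]]].
- by apply: frakK_usub; rewrite /zeroS raddf0.
- move=> K1 K2 /uK h1 /uK h2; split; apply: frakK_usub.
  + by rewrite /addS usubD h1 h2 addr0.
  + by rewrite /oppS usubN h1 oppr0.
  + by rewrite mulSE big_ord1 -mul_usub_mx h1 mul0mx.
- by apply: frakL_rsub; rewrite /zeroS raddf0.
- move=> K1 K2 /rL h1 /rL h2; split; apply: frakL_rsub.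
  + by rewrite /addS rsubD h1 h2 addr0.
  + by rewrite /oppS rsubN h1 oppr0.
  + by rewrite mulSE big_ord1 -mulmx_rsub h2 mulmx0.
- move=> K hK [_ hne]; apply: inv_fromK => //.
  rewrite unitmxE unitfE; move: hne; rewrite (detS_K hr hK).2.
  by rewrite blockQK.
- move=> L hL [_ hne]; apply: inv_fromL => //.
  rewrite unitmxE unitfE; move: hne; rewrite (detS_L hs hL).2.
  by rewrite blockQL.
- by move=> K hK; apply: detS_K.
- by move=> L hL; apply: detS_L.
- move=> K M /uK h; apply: frakK_usub.
  by rewrite mulSE big_ord1 -mul_usub_mx h mul0mx.
- move=> M L /rL h; apply: frakL_rsub.
  by rewrite mulSE big_ord1 -mulmx_rsub h mulmx0.
- move=> L K /rL hL /uK hK; rewrite mulSE big_ord1 /=.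
  rewrite -[L 0%N]hsubmxK -[K 0%N]vsubmxK hL hK mul_row_col.
  by rewrite mulmx0 mul0mx addr0.
Qed.
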